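(* Let $X$ and $Y$ be locally compact Hausdorff spaces, $p:X\to Y$ a perfect irreducible map, $f:X'\to X$ and $g:Y'\to Y$ continuous maps of topological spaces, and $p':X'\to Y'$ a closed irreducible map with $p\circ f=g\circ p'$. Then every $G\in\mathrm{RC}(X)$ satisfies $$\mathrm{cl}(g^{-1}(\mathrm{int}(p(G))))=\bigvee\{p'(\mathrm{cl}(f^{-1}(\mathrm{int}(H))))\mid H\in\mathrm{CR}(X),\ p(H)\subseteq\mathrm{int}(p(G))\},$$ the join being taken in the Boolean algebra $\mathrm{RC}(Y')$.
   Context: For a space $X$, $\mathrm{RC}(X)$ is the complete Boolean algebra of regular closed sets ($F=\mathrm{cl}(\mathrm{int}F)$), in which $\bigvee_i F_i=\mathrm{cl}(\bigcup_i F_i)$; $\mathrm{CR}(X)$ is the set of compact regular closed subsets. A perfect map is a continuous closed map with compact fibres; an irreducible map is a continuous surjection such that no proper closed subset of the domain is mapped onto the codomain. *)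

(* Defs.v *)
From HB Require Import structures.
From mathcomp Require Import all_boot all_order.
From mathcomp Require Import boolp classical_sets functions topology.
Set Implicit Arguments. Unset Strict Implicit. Unset Printing Implicit Defensive.
Local Open Scope classical_set_scope.

Definition regular_closed {T : topologicalType} (F : set T) : Prop :=
  F = closure (interior F).

Definition compact_regular_closed {T : topologicalType} (F : set T) : Prop :=
  compact F /\ regular_closed F.

(* join in RC(X) of a family of regular closed sets: cl(union) *)
Definition rc_join {T : topologicalType} (S : set (set T)) : set T :=
  closure (\bigcup_(F in S) F).

Definition closed_map {S T : topologicalType} (h : S -> T) : Prop :=
  forall A : set S, closed A -> closed (h @` A).

Definition perfect_map {S T : topologicalType} (h : S -> T) : Prop :=
  [/\ continuous h, closed_map h & forall y : T, compact (h @^-1` [set y])].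

Definition irreducible_map {S T : topologicalType} (h : S -> T) : Prop :=
  [/\ continuous h, h @` setT = setT &
      forall A : set S, closed A -> h @` A = setT -> A = setT].

(* Main.v *)
Require Import Defs.
From HB Require Import structures.
From mathcomp Require Import all_boot all_order.
From mathcomp Require Import boolp classical_sets functions topology.
Local Open Scope classical_set_scope.

Lemma build_H (X : topologicalType) (x : X) (U : set X) :
  hausdorff_space X -> locally_compact [set: X] -> open U -> U x ->
  exists H : set X, compact_regular_closed H /\ H `<=` U /\ interior H x.
Proof.
move=> hs lc oU Ux.
have [//|V Vx [cptV clV]] := lc x; rewrite withinET in Vx.
have reg := compact_regular hs cptV Vx.
have UVx : nbhs x (U `&` V) by apply: filterI => //; exact: open_nbhs_nbhs.
have [W Wx clW] := reg _ UVx.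
exists (closure (interior W)); split; [split|split].
- apply: (subclosed_compact _ cptV); first exact: closed_closure.
  apply: subset_trans _ (fun z (h : (U `&` V) z) => h.2).
  by apply: subset_trans clW; apply: closureS; exact: interior_subset.
- rewrite /regular_closed; apply/seteqP; split.
  + apply: closureS; rewrite -open_subsetE; last exact: open_interior.
    exact: subset_closure.
  + have e : closure (closure (interior W)) = closure (interior W).
      by apply/esym/closure_id; exact: closed_closure.
    by rewrite -[X in _ `<=` X]e; apply: closureS; exact: interior_subset.
- apply: subset_trans _ (fun z (h : (U `&` V) z) => h.1).
  by apply: subset_trans clW; apply: closureS; exact: interior_subset.
- have : interior W `<=` interior (closure (interior W)).
    rewrite -open_subsetE; last exact: open_interior.
    exact: subset_closure.
  by apply.
Qed.

Theorem lemma4p6 (X Y X' Y' : topologicalType)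
  (p : X -> Y) (f : X' -> X) (g : Y' -> Y) (p' : X' -> Y') :
  hausdorff_space X -> locally_compact [set: X] ->
  hausdorff_space Y -> locally_compact [set: Y] ->
  perfect_map p -> irreducible_map p ->
  continuous f -> continuous g ->
  closed_map p' -> irreducible_map p' ->
  p \o f = g \o p' ->
  forall G : set X, regular_closed G ->
    closure (g @^-1` interior (p @` G)) =
    rc_join [set p' @` closure (f @^-1` interior H) | H in
              [set H : set X | compact_regular_closed H /\
                               p @` H `<=` interior (p @` G)]].
Proof.
move=> hX lcX _ _ pm _ cf _ _ ip' comm G _.
case: pm => cp _ _; case: ip' => cp' sp' _.
have comm' x : p (f x) = g (p' x) by have := congr1 (fun h => h x) comm.
rewrite /rc_join; apply/seteqP; split.
- apply: closureS => y' gy'.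
  have : [set: Y'] y' by [].
  rewrite -sp' => -[x' _ ex']; subst y'.
  have oU : open (p @^-1` interior (p @` G)).
    apply: open_comp; last exact: open_interior.
    move=> z _; exact: cp.
  have Ux : (p @^-1` interior (p @` G)) (f x').
    by rewrite /preimage /= comm'; exact: gy'.
  have [H [cH [HU Hx]]] := @build_H _ _ _ hX lcX oU Ux.

  exists (p' @` closure (f @^-1` interior H)).
    exists H => //; split => //.
    by move=> _ [z Hz <-]; apply: HU.
  by exists x' => //; apply: subset_closure.
- have e : closure (closure (g @^-1` interior (p @` G))) =
           closure (g @^-1` interior (p @` G)).
    by apply/esym/closure_id; exact: closed_closure.
  rewrite -[X in _ `<=` X]e; apply: closureS.
  move=> _ [_ [H [_ HG] <-] [x' clx' <-]] B Bx.
  have : nbhs x' (p' @^-1` B) by exact: cp'.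
  move=> /clx' [a [fa Ba]].
  exists (p' a); split => //=.
  rewrite -comm'; apply: HG; exists (f a) => //.
  exact: interior_subset.
Qed.
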